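(* Let $X$ be a $d$-complex, $-1\le i\le k<d$, $A\in C^k$ and $0<\eta<1$. Let $\sigma\in S^i_\eta(A)$, $t\in L_\eta(A,\sigma)$, $t'\in A$, and $p\in X(k+1)$ with $t\subset p$ and $t'\subset p$. Then either $t'\cap\sigma$ is a fat face (i.e. $t'\cap\sigma\in S^{|t'\cap\sigma|-1}_\eta(A)$) and $t'\in L_\eta(A,t'\cap\sigma)$, or $p\in\Upsilon_\eta(A)$.
   Context: A $d$-complex is a finite pure $d$-dimensional simplicial complex $X$ (faces are vertex sets, $\emptyset$ is the unique $(-1)$-face, $|\sigma|$ = number of vertices); $X(k)$ = set of $k$-faces; $C^k$ = $\mathbb{F}_2$-cochains identified with subsets of $X(k)$. Weight $w(\sigma)=\frac{|\{F\in X(d):\sigma\subset F\}|}{\binom{d+1}{|\sigma|}|X(d)|}$, norm $\|A\|=\sum_{\sigma\in A}w(\sigma)$. Link $X_\sigma=\{\tau\in X:\tau\cap\sigma=\emptyset,\tau\cup\sigma\in X\}$ with own norm $\|\cdot\|_\sigma$; localization $I_\sigma(A)=\{\tau\in X_\sigma:\tau\sqcup\sigma\in A\}$. Fat faces: $S^k_\eta(A)=A$ and for $i=k,\dots,0$, $S^{i-1}_\eta(A)=\{\sigma\in X(i-1):\|I_\sigma(S^i_\eta(A))\|_\sigma\ge\eta^{2^{k-i}}\}$. A dead-end is a pair $(\sigma,\sigma')$ with $\sigma,\sigma'\in S^j_\eta(A)$ for some $j$, $|\sigma\cap\sigma'|=|\sigma|-1$, and $\sigma\cap\sigma'\notin S^{j-1}_\eta(A)$;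 $\Upsilon_\eta(A)\subset X(k+1)$ is the set of $(k+1)$-faces containing $\sigma\cup\sigma'$ for some dead-end. For $\sigma\in S^i_\eta(A)$, $L_\eta(A,\sigma)=\{t\in A:\exists\,\sigma=\sigma_i\subset\dots\subset\sigma_k=t,\ \sigma_j\in S^j_\eta(A)\ \forall j\}$. *)

(* Defs.v *)
From HB Require Import structures.
From mathcomp Require Import all_boot all_order all_algebra.
Set Implicit Arguments. Unset Strict Implicit. Unset Printing Implicit Defensive.
Import Order.TTheory GRing.Theory Num.Theory.

(* A k-face has k+1 vertices, so we index
   everything by the number of vertices ("size") m = k+1 >= 0. *)

Section Defs.
Variable V : finType.
Implicit Types (X Y A B : {set {set V}}) (s t : {set V}).

(* finite pure d-dimensional simplicial complex (finiteness: V is finite) *)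
Definition is_dcomplex (X : {set {set V}}) (d : nat) : Prop :=
  [/\ set0 \in X,
      (forall s t, t \subset s -> s \in X -> t \in X),
      (forall s, s \in X -> #|s| <= d.+1) &
      (forall s, s \in X -> exists2 F, F \in X & (#|F| == d.+1) && (s \subset F))].

(* faces with m vertices, i.e. X(m-1) *)
Definition faces X (m : nat) : {set {set V}} := [set s in X | #|s| == m].

(* weight of tau in a complex Y whose top faces have n vertices (dimension n-1) *)
Definition weight Y (n : nat) (tau : {set V}) : rat :=
  (#|[set F in Y | (#|F| == n) && (tau \subset F)]|%:R /
   ('C(n, #|tau|) * #|faces Y n|)%:R)%R.

Definition norm Y (n : nat) (B : {set {set V}}) : rat :=
  (\sum_(tau in B) weight Y n tau)%R.

Definition link X (sigma : {set V}) : {set {set V}} :=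
  [set tau in X | [disjoint tau & sigma] && (tau :|: sigma \in X)].

(* norm in the link X_sigma, a (d - |sigma|)-complex, i.e. top faces have
   d+1-|sigma| vertices *)
Definition link_norm X (d : nat) sigma B : rat :=
  norm (link X sigma) (d.+1 - #|sigma|) B.

Definition loc X sigma B : {set {set V}} :=
  [set tau in link X sigma | tau :|: sigma \in B].

(* fat_aux r = S^{k-r}_eta(A) (faces with K - r vertices, K = k+1) *)
Fixpoint fat_aux X (d K : nat) (eta : rat) A (r : nat) : {set {set V}} :=
  match r with
  | 0 => A
  | r'.+1 =>
      [set sigma in X | (#|sigma| == K - r'.+1) &&
        (eta ^+ (2 ^ r') <= link_norm X d sigma (loc X sigma (fat_aux X d K eta A r')))%R]
  end.

(* fat X d K eta A m = S^{m-1}_eta(A), for A in C^{K-1}, for 0 <= m <= K *)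
Definition fat X d K eta A (m : nat) : {set {set V}} :=
  if m <= K then fat_aux X d K eta A (K - m) else set0.

Definition dead_end X d K eta A (s s' : {set V}) : Prop :=
  exists m : nat, [/\ 0 < m, s \in fat X d K eta A m, s' \in fat X d K eta A m,
     #|s :&: s'|.+1 = #|s| & (s :&: s') \notin fat X d K eta A m.-1].

Definition Upsilon X d K eta A (p : {set V}) : Prop :=
  p \in faces X K.+1 /\
  exists s s', dead_end X d K eta A s s' /\ (s :|: s') \subset p.

Definition inL X d K eta A (sigma t : {set V}) : Prop :=
  t \in A /\
  exists c : nat -> {set V},
    [/\ c #|sigma| = sigma, c K = t,
        (forall m, #|sigma| <= m <= K -> c m \in fat X d K eta A m) &
        (forall m, #|sigma| <= m < K -> c m \subset c m.+1)].

End Defs.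

(* Main.v *)
Require Import Defs.
From HB Require Import structures.
From mathcomp Require Import all_boot all_order all_algebra zify.
From Stdlib Require Import Classical.
Import Order.TTheory GRing.Theory Num.Theory.

Lemma fat_card (V : finType) (X : {set {set V}}) d K (eta : rat) (A : {set {set V}}) (n : nat) (s : {set V}) :
  A \subset faces X K -> s \in fat X d K eta A n -> #|s| = n /\ n <= K.
Proof.
move=> HA; rewrite /fat; case: leqP => hn; last by rewrite inE.
case E: (K - n) => [|r] /=.
- move=> sA; have := subsetP HA _ sA; rewrite inE => /andP[_ /eqP ->]; split=>//; lia.
- rewrite inE => /andP[_ /andP[/eqP -> _]]; split=>//; lia.
Qed.

Lemma fatK (V : finType) (X : {set {set V}}) d K (eta : rat) (A : {set {set V}}) : fat X d K eta A K = A.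
Proof. by rewrite /fat leqnn subnn. Qed.

Arguments fat_card {V X d K eta A n s}.
Lemma setI_D1 (V : finType) (A B : {set V}) v : A \subset B -> A :&: (B :\ v) = A :\ v.
Proof.
move=> sAB; apply/setP=> x; rewrite !inE; case xA: (x \in A); rewrite ?andbF //=.
by rewrite (subsetP sAB _ xA) andbT.
Qed.

Arguments setI_D1 {V A B v}.
Lemma D1_eq (V : finType) (A B : {set V}) v :
  v \in B -> A \subset B -> v \notin A -> #|A|.+1 = #|B| -> B :\ v = A.
Proof.
move=> vB sAB vA cAB; apply/esym/eqP; rewrite eqEcard; apply/andP; split.
  apply/subsetP=> x xA; rewrite !inE (subsetP sAB _ xA) andbT; apply/eqP=> xv.
  by rewrite -xv xA in vA.
by move: cAB; rewrite (cardsD1 v B) vB add1n => -[->].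
Qed.
Arguments D1_eq {V A B v}.
Ltac slia := repeat match goal with
 | H : is_true (_ <= _) |- _ => revert H
 | H : is_true (_ < _) |- _ => revert H
 | H : @eq ?T _ _ |- _ => unify T nat; revert H
 | H : ~ (@eq ?T _ _) |- _ => unify T nat; revert H
 | H : is_true (_ && _) |- _ => case/andP: H => ? ?
 | H : is_true (~~ (_ == _)) |- _ => move/eqP: H => H
 end; repeat match goal with H : _ |- _ => clear H end; intros; lia.

Theorem mainTheorem9 (V : finType) (X : {set {set V}}) (d K m : nat)
    (A : {set {set V}}) (eta : rat) (sigma t t' p : {set V}) :
  is_dcomplex X d ->
  K <= d -> m <= K ->
  A \subset faces X K ->
  (0 < eta)%R -> (eta < 1)%R ->
  sigma \in fat X d K eta A m ->
  inL X d K eta A sigma t ->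
  t' \in A ->
  p \in faces X K.+1 -> t \subset p -> t' \subset p ->
  (t' :&: sigma \in fat X d K eta A #|t' :&: sigma| /\
   inL X d K eta A (t' :&: sigma) t')
  \/ Upsilon X d K eta A p.
Proof.
move=> _ _ HmK HA _ _ Hs [tA [c [c0 cK cfat csub]]] t'A pX tp t'p.
have [hsm _] := fat_card HA Hs.
have Hcard n : #|sigma| <= n <= K -> #|c n| = n.
  by move=> h; have [] := fat_card HA (cfat n h).
have hsK : #|sigma| <= K by slia.
have Hmono n : #|sigma| <= n <= K -> c n \subset t.
  move Hj: (K - n) => j; elim: j n Hj => [|j IH] n Hj hn.
    have ->: n = K by slia.
    by rewrite cK.
  apply: subset_trans (csub n _) (IH n.+1 _ _); slia.
have sigt : sigma \subset t by rewrite -{1}c0; apply: Hmono; slia.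
have tK : #|t| = K by have := subsetP HA _ tA; rewrite inE => /andP[_ /eqP].
have t'K : #|t'| = K by have := subsetP HA _ t'A; rewrite inE => /andP[_ /eqP].
have pK : #|p| = K.+1 by move: pX; rewrite inE => /andP[_ /eqP].
case: (eqVneq t t') => [<-|tnt'].
  left; have -> : t :&: sigma = sigma by apply/setIidPr.
  by rewrite hsm; split=> //; split=> //; exists c.
have : ~~ (t \subset t').
  apply/negP=> stt'; move/eqP: tnt'; apply; apply/eqP; rewrite eqEcard stt' tK t'K leqnn.
  done.
case/subsetPn=> v vt vt'.
have vp : v \in p := subsetP tp _ vt.
have t'E : t' = p :\ v.
  apply/eqP; rewrite eqEcard; apply/andP; split.
    apply/subsetP=> x xt'; rewrite !inE (subsetP t'p _ xt') andbT; apply/eqP=> xv.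
    by rewrite -xv xt' in vt'.
  by move: pK; rewrite (cardsD1 v p) vp add1n => -[->]; rewrite t'K.
case: (classic (Upsilon X d K eta A p)) => [Hu|Hnu]; first by right.
left.
have noDE s s' n : 0 < n -> s \in fat X d K eta A n -> s' \in fat X d K eta A n ->
    #|s :&: s'|.+1 = #|s| -> s :|: s' \subset p -> s :&: s' \in fat X d K eta A n.-1.
  move=> n0 sf s'f cs us; case: (boolP (s :&: s' \in _)) => // H; exfalso; apply: Hnu.
  split=> //; exists s, s'; split=> //; exists n; by split.
clear Hnu.
have vmono n : #|sigma| <= n < K -> v \in c n -> v \in c n.+1.
  by move=> h; apply: (subsetP (csub n h)).
have claim n : #|sigma| <= n.+1 <= K -> v \in c n.+1 -> c n.+1 :\ v \in fat X d K eta A n.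
  move Hj: (K - n.+1) => j; elim: j n Hj => [|j IH] n Hj hn vin.
    have nK : n.+1 = K by slia.
    have e1 : t :&: t' = t :\ v by rewrite t'E setI_D1.
    have K0 : 0 < K by slia.
    have tf : t \in fat X d K eta A K by rewrite fatK.
    have t'f : t' \in fat X d K eta A K by rewrite fatK.
    have cd : #|t :&: t'|.+1 = #|t| by rewrite e1 (cardsD1 v t) vt add1n.
    have un : t :|: t' \subset p by rewrite subUset tp t'p.
    have nK' : K.-1 = n by slia.
    have h := noDE t t' K K0 tf t'f cd un.
    rewrite e1 nK' in h; rewrite nK cK; exact h.
  have h2 := IH n.+1 ltac:(slia) ltac:(slia) (vmono n.+1 ltac:(slia) vin).
  have s12 : c n.+1 \subset c n.+2 by apply: csub; slia.
  have e2 : c n.+1 :&: (c n.+2 :\ v) = c n.+1 :\ v by apply: setI_D1.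
  have n0 : 0 < n.+1 by [].
  have f1 : c n.+1 \in fat X d K eta A n.+1 by apply: cfat; slia.
  have cd : #|c n.+1 :&: (c n.+2 :\ v)|.+1 = #|c n.+1|.
    by rewrite e2 (cardsD1 v (c n.+1)) vin add1n.
  have un : c n.+1 :|: (c n.+2 :\ v) \subset p.
    rewrite subUset; apply/andP; split.
      by apply: subset_trans tp; apply: Hmono; slia.
    apply: subset_trans tp; apply: subset_trans (subsetDl _ _) _; apply: Hmono; slia.
  have h := noDE _ _ n.+1 n0 f1 h2 cd un.
  rewrite e2 in h; exact h.
have sigp : sigma \subset p := subset_trans sigt tp.
set T := t' :&: sigma.
have TE : T = sigma :\ v by rewrite /T setIC t'E setI_D1.
clearbody T.
have hT : #|T| + (v \in sigma) = #|sigma| by rewrite TE (cardsD1 v sigma) addnC.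
have T1 : #|sigma| <= #|T|.+1 by move: hT; case: (v \in sigma) => /= ?; slia.
have T2 : #|T| <= #|sigma| by move: hT; case: (v \in sigma) => /= ?; slia.
have TK : #|T| < K.
  move: hT; case vs: (v \in sigma) => /= hT; first by slia.
  have : #|sigma| != K.
    apply/negP=> /eqP e; have : sigma = t.
      by apply/eqP; rewrite eqEcard sigt tK e leqnn.
    by move=> e'; rewrite e' vt in vs.
  by move=> /eqP ?; slia.
have F2 n : #|T| <= n < K -> v \notin c n.+1 -> #|sigma| <= n.
  move=> hn hv; case: (leqP #|sigma| n) => // lt.
  move: hT; case vs: (v \in sigma) => /= hT; last by slia.
  have e : n.+1 = #|sigma| by slia.
  by move: hv; rewrite e c0 vs.
pose c' n := if n == K then t' else if v \in c n.+1 then c n.+1 :\ v else c n.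
have cfat' n : #|T| <= n <= K -> c' n \in fat X d K eta A n.
  move=> hn; rewrite /c'; case: eqP => [->|nK]; first by rewrite fatK.
  case: ifP => hv; first by apply: claim => //; slia.
  have := F2 n ltac:(slia) (negbT hv) => h.
  by apply: cfat; slia.
have c'0 : c' #|T| = T.
  rewrite /c' (_ : (#|T| == K) = false); last by apply/negbTE; rewrite neq_ltn TK.
  move: hT; case vs: (v \in sigma) => /= hT.
    have e : #|T|.+1 = #|sigma| by slia.
    by rewrite e c0 vs TE.
  have TS : T = sigma.
    rewrite TE; apply/setP=> x; rewrite !inE; case: eqP => // ->; by rewrite vs.
  have e : #|T| = #|sigma| by slia.
  rewrite e c0; case: ifP => hv //.
  rewrite TS; apply: D1_eq => //; last by rewrite (Hcard #|sigma|.+1) //; slia.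
    by rewrite -{1}c0; apply: csub; slia.
  by rewrite vs.
have c'sub n : #|T| <= n < K -> c' n \subset c' n.+1.
  move=> hn; rewrite /c' (_ : (n == K) = false); last by apply/negbTE; rewrite neq_ltn; case/andP: hn => _ ->.
  case: (eqVneq n.+1 K) => [e|ne].
    rewrite ?e ?eqxx; case: ifP => hv.
      by rewrite cK t'E; apply: setSD.
    by rewrite cK vt in hv.
  rewrite ?(negbTE ne); case: ifP => hv1; case: ifP => hv2.
  - by apply: setSD; apply: csub; slia.
  - by rewrite (vmono n.+1 ltac:(slia) hv1) in hv2.
  - have := F2 n hn (negbT hv1) => hs.
    have s1 : c n \subset c n.+1 by apply: csub; slia.
    have s2 : c n.+1 \subset c n.+2 by apply: csub; slia.
    apply/subsetP=> x xn; rewrite !inE (subsetP s2 _ (subsetP s1 _ xn)) andbT.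
    apply/eqP=> xv; move: xn; rewrite xv => xn.
    by rewrite (subsetP s1 _ xn) in hv1.
  - have := F2 n hn (negbT hv1) => hs.
    by apply: csub; slia.
split.
  by rewrite -{1}c'0; apply: cfat'; slia.
split=> //; exists c'; split=> //.
by rewrite /c' eqxx.
Qed.
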